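(* Let $k\ge 2$ and let $G$ be a $k$-tree. Then every vertex of $G$ has mindegree at least $k-1$. Moreover, $G$ has at least $k+1$ vertices of mindegree exactly $k-1$, unless $G$ is isomorphic to the symmetric complete graph $\overleftrightarrow{K}_k$ or $G$ is a symmetric path of odd length (in which case $k=2$).
   Context: Digraphs have no loops and no parallel arcs, but may contain digons. $d_{min}(v)=\min(d^+(v),d^-(v))$ is the mindegree of $v$; $\Delta_{max}(G)=\max_v\max(d^+(v),d^-(v))$. A symmetric cycle / complete graph / path is obtained from the corresponding undirected graph by replacing each edge by a digon. $\mathcal B_1$ is the set of directed cycles (including digons), $\mathcal B_2$ the set of symmetric cycles of odd length, and for $j\ge 3$, $\mathcal B_j=\{\overleftrightarrow K_{j+1}\}$ (all up to isomorphism). A digraph $G$ is a direct composition of digraphs $G_1,G_2$ on vertices $v_1\in V(G_1)$, $v_2\in V(G_2)$ if it is obtained from the disjoint union of $G_1$ and $G_2$ by adding exactly one arc between $v_1$ and $v_2$ (either $v_1v_2$ or $v_2v_1$). $G$ is a cyclic composition of $G_1,\dots,G_\ell$ ($\ell\ge 2$) on vertices $v_i\in V(G_i)$ if it is obtained from their disjoint union by adding the arcs $v_iv_{i+1}$ for $i=1,\dots,\ell-1$ and $v_\ell v_1$. A digraph $G$ is a $k$-tree if $\Delta_{max}(G)\le k$ and it can be built by the rules: every member of $\mathcal B_{k-1}$ is a $k$-tree; a direct or cyclic composition of $k$-trees is a $k$-tree. *)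

(* Defs.v *)
(* Finite digraphs are (T : finType, a : rel T). *)
From mathcomp Require Import all_boot.
Set Implicit Arguments. Unset Strict Implicit. Unset Printing Implicit Defensive.

Definition outdeg (T : finType) (a : rel T) (v : T) : nat := #|[set w | a v w]|.
Definition indeg (T : finType) (a : rel T) (v : T) : nat := #|[set w | a w v]|.
Definition dmin (T : finType) (a : rel T) (v : T) : nat := minn (outdeg a v) (indeg a v).
Definition Dmax (T : finType) (a : rel T) : nat :=
  \max_(v : T) maxn (outdeg a v) (indeg a v).

Definition diso (T : finType) (a : rel T) (U : finType) (b : rel U) : Prop :=
  exists f : T -> U, bijective f /\ forall x y, b (f x) (f y) = a x y.

(* directed cycle on n vertices (n >= 2; n = 2 is a digon) *)
Definition dcycle (n : nat) : rel 'I_n :=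
  fun i j => val j == (val i).+1 %% n.
Definition scycle (n : nat) : rel 'I_n :=
  fun i j => (val j == (val i).+1 %% n) || (val i == (val j).+1 %% n).
Definition scomplete (n : nat) : rel 'I_n := fun i j => i != j.
(* symmetric path of length n (n edges, n+1 vertices) *)
Definition spath (n : nat) : rel 'I_n.+1 :=
  fun i j => (val j == (val i).+1) || (val i == (val j).+1).

Arguments dcycle n : clear implicits.
Arguments scycle n : clear implicits.
Arguments scomplete n : clear implicits.
Arguments spath n : clear implicits.

Definition inB (j : nat) (T : finType) (a : rel T) : Prop :=
  if j == 1 then exists2 n : nat, 2 <= n & diso a (dcycle n)
  else if j == 2 then exists2 n : nat, (3 <= n) && odd n & diso a (scycle n)
  else (3 <= j) /\ diso a (scomplete j.+1).

(* direct composition: disjoint union plus one arc between v1 and v2,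
   oriented v1 -> v2 if dir is true, v2 -> v1 otherwise *)
Definition direct_rel (T1 T2 : finType) (a1 : rel T1) (a2 : rel T2)
  (v1 : T1) (v2 : T2) (dir : bool) : rel (T1 + T2)%type :=
  fun x y => match x, y with
  | inl x1, inl y1 => a1 x1 y1
  | inr x2, inr y2 => a2 x2 y2
  | inl x1, inr y2 => dir && (x1 == v1) && (y2 == v2)
  | inr x2, inl y1 => ~~ dir && (x2 == v2) && (y1 == v1)
  end.

(* cyclic composition of Ts 0, ..., Ts (l-1) on vertices vs i,
   adding arcs vs i -> vs (i+1 mod l) *)
Definition cyclic_rel (l : nat) (Ts : 'I_l -> finType)
  (as_ : forall i, rel (Ts i)) (vs : forall i, Ts i)
  : rel {i : 'I_l & Ts i} :=
  fun x y =>
    ((tag x == tag y) && as_ (tag x) (tagged x) (tagged_as x y))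
    || [&& tagged x == vs (tag x), tagged y == vs (tag y)
         & val (tag y) == (val (tag x)).+1 %% l].

Inductive ktree (k : nat) : forall T : finType, rel T -> Prop :=
| kt_base (T : finType) (a : rel T) :
    Dmax a <= k -> inB k.-1 a -> ktree k a
| kt_direct (T : finType) (a : rel T) (T1 T2 : finType) (a1 : rel T1) (a2 : rel T2)
    (v1 : T1) (v2 : T2) (dir : bool) :
    Dmax a <= k -> ktree k a1 -> ktree k a2 ->
    diso a (direct_rel a1 a2 v1 v2 dir) -> ktree k a
| kt_cyclic (T : finType) (a : rel T) (l : nat) (Ts : 'I_l -> finType)
    (as_ : forall i, rel (Ts i)) (vs : forall i, Ts i) :
    2 <= l -> Dmax a <= k -> (forall i, ktree k (as_ i)) ->
    diso a (cyclic_rel as_ vs) -> ktree k a.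

(* Main.v *)
Require Import Defs.
From mathcomp Require Import all_boot zify.
Set Implicit Arguments. Unset Strict Implicit. Unset Printing Implicit Defensive.

Section Iso.
Variables (T U : finType) (a : rel T) (b : rel U) (f : T -> U).
Hypothesis fbij : bijective f.
Hypothesis fhom : forall x y, b (f x) (f y) = a x y.

Lemma out_iso x : outdeg a x = outdeg b (f x).
Proof.
rewrite /outdeg -(card_imset _ (bij_inj fbij)); apply: eq_card => u.
case: (fbij) => g fg gf.
by rewrite -(gf u) (mem_imset _ _ (bij_inj fbij)) !inE fhom.
Qed.

Lemma in_iso x : indeg a x = indeg b (f x).
Proof.
rewrite /indeg -(card_imset _ (bij_inj fbij)); apply: eq_card => u.
case: (fbij) => g fg gf.
by rewrite -(gf u) (mem_imset _ _ (bij_inj fbij)) !inE fhom.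
Qed.

Lemma cnt_iso m : #|[set v | dmin a v == m]| = #|[set u | dmin b u == m]|.
Proof.
rewrite -(card_imset _ (bij_inj fbij)); apply: eq_card => u.
case: (fbij) => g fg gf.
by rewrite -(gf u) (mem_imset _ _ (bij_inj fbij)) !inE /dmin -out_iso -in_iso.
Qed.

End Iso.

Lemma Dmax_le (T : finType) (a : rel T) k v : Dmax a <= k -> outdeg a v <= k /\ indeg a v <= k.
Proof.
move=> H; have := leq_trans (leq_bigmax v) H.
rewrite geq_max; by case/andP.
Qed.

Lemma diso_trans (T U V : finType) (a : rel T) (b : rel U) (c : rel V) :
  diso a b -> diso b c -> diso a c.
Proof.
move=> [f [fb fh]] [g [gb gh]]; exists (g \o f); split; first exact: bij_comp.
by move=> x y /=; rewrite gh fh.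
Qed.

Definition PathLab (T : finType) (a : rel T) : Prop :=
  exists n, odd n /\ exists f : T -> nat, [/\ injective f, (forall x, f x <= n),
    (forall m, m <= n -> exists x, f x = m) &
    (forall x y, a x y = (f y == (f x).+1) || (f x == (f y).+1))].

Lemma PathLab_iso (T U : finType) (a : rel T) (b : rel U) :
  diso a b -> PathLab b -> PathLab a.
Proof.
move=> [h [hb hh]] [n [on [g [gi gb gs gr]]]]; exists n; split => //.
case: (hb) => h' hK h'K.
exists (g \o h); split => /=.
- exact: inj_comp gi (bij_inj hb).
- by move=> x; apply: gb.
- by move=> m /gs [y <-]; exists (h' y); rewrite h'K.
- by move=> x y; rewrite -hh gr.
Qed.

Lemma PathLab_spath (T : finType) (a : rel T) :
  PathLab a -> exists2 n, odd n & diso a (spath n).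
Proof.
move=> [n [on [f [fi fb fs fr]]]]; exists n => //.
pose f' := fun x => (inord (f x) : 'I_n.+1).
have f'E x : nat_of_ord (f' x) = f x by rewrite /f' inordK // ltnS.
have f'i : injective f' by move=> x y E; apply: fi; rewrite -!f'E E.
have cT : #|'I_n.+1| <= #|T|.
  rewrite -(card_codom f'i); apply: subset_leq_card; apply/subsetP => u _.
  have [x fx] := fs u (ltn_ord u).
  by apply/codomP; exists x; apply: val_inj => /=; rewrite f'E.
exists f'; split; first exact: inj_card_bij f'i cT.
by move=> x y; rewrite /spath /= !f'E fr.
Qed.

Definition cnt k (T : finType) (a : rel T) := #|[set v | dmin a v == k.-1]|.
Definition Exc k (T : finType) (a : rel T) : Prop :=
  if k == 2 then PathLab a else diso a (scomplete k).
Definition Inv k (T : finType) (a : rel T) : Prop :=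
  (forall v, k.-1 <= outdeg a v /\ k.-1 <= indeg a v) /\
  (k.+1 <= cnt k a \/ [/\ k <= cnt k a, (forall v, outdeg a v = indeg a v) & Exc k a]).

Lemma Inv_iso k (T U : finType) (a : rel T) (b : rel U) :
  diso a b -> Inv k b -> Inv k a.
Proof.
move=> D [H1 H2]; have [f [fb fh]] := D.
have co : cnt k a = cnt k b by rewrite /cnt (cnt_iso fb fh).
split.
  by move=> v; rewrite (out_iso fb fh) (in_iso fb fh); apply: H1.
rewrite co; case: H2 => [|[c1 c2 c3]]; [by left|right]; split => //.
  by move=> v; rewrite (out_iso fb fh) (in_iso fb fh).
move: c3; rewrite /Exc; case: (k == 2); first exact: PathLab_iso.
exact: diso_trans.
Qed.

Lemma card_sum_split (T1 T2 : finType) (P : pred (T1 + T2)%type) :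
  #|[set w | P w]| = #|[set x | P (inl x)]| + #|[set y | P (inr y)]|.
Proof. by rewrite -!sum1dep_card big_sumType. Qed.

Lemma card_sig_split (I : finType) (Ts : I -> finType) (P : pred {i : I & Ts i}) :
  #|[set w | P w]| = \sum_i #|[set x | P (@Tagged I i Ts x)]|.
Proof.
under eq_bigr => i _ do rewrite -(sum1dep_card (fun x : Ts i => P (Tagged Ts x))).
rewrite -sum1dep_card.
rewrite (sig_big_dep (fun i => true) (fun i (x : Ts i) => P (@Tagged I i Ts x)) (fun i (x : Ts i) => 1)) /=.
by apply: eq_bigl => -[i x].
Qed.

Lemma card_cond (T : finType) (c : bool) (v : T) :
  #|[set y | c && (y == v)]| = c.
Proof.
case: c => /=; last by apply: eq_card0 => y; rewrite inE.
by rewrite (_ : [set y | y == v] = [set v]) ?cards1 //; apply/setP => y; rewrite !inE.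
Qed.

Section Direct.
Variables (T1 T2 : finType) (a1 : rel T1) (a2 : rel T2) (v1 : T1) (v2 : T2) (dir : bool).
Let R := direct_rel a1 a2 v1 v2 dir.

Lemma out_inl x : outdeg R (inl x) = outdeg a1 x + (dir && (x == v1)).
Proof.
rewrite /outdeg card_sum_split; congr (_ + _).
by rewrite -(card_cond _ v2); apply: eq_card => y; rewrite !inE /R /=; case: dir => //=; rewrite ?andbT ?andbF // andbC.
Qed.
Lemma in_inl x : indeg R (inl x) = indeg a1 x + (~~ dir && (x == v1)).
Proof.
rewrite /indeg card_sum_split; congr (_ + _).
by rewrite -(card_cond _ v2); apply: eq_card => y; rewrite !inE /R /=; case: dir => //=; rewrite ?andbT ?andbF // andbC.
Qed.
Lemma out_inr x : outdeg R (inr x) = outdeg a2 x + (~~ dir && (x == v2)).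
Proof.
rewrite /outdeg card_sum_split addnC; congr (_ + _).
by rewrite -(card_cond _ v1); apply: eq_card => y; rewrite !inE /R /=; case: dir => //=; rewrite ?andbT ?andbF // andbC.
Qed.
Lemma in_inr x : indeg R (inr x) = indeg a2 x + (dir && (x == v2)).
Proof.
rewrite /indeg card_sum_split addnC; congr (_ + _).
by rewrite -(card_cond _ v1); apply: eq_card => y; rewrite !inE /R /=; case: dir => //=; rewrite ?andbT ?andbF // andbC.
Qed.
End Direct.

Lemma contrib_sub (T : finType) (a : rel T) (o i : T -> nat) (v : T) m :
  (forall x, x != v -> o x = outdeg a x /\ i x = indeg a x) ->
  #|[set x | dmin a x == m]| - 1 <= #|[set x | minn (o x) (i x) == m]|.
Proof.
move=> H; rewrite (cardsD1 v) leq_subLR; apply: leq_add; first by case: (_ \in _).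
apply: subset_leq_card; apply/subsetP => x; rewrite !inE => /andP [xv].
by have [-> ->] := H x xv.
Qed.

Lemma contrib_dir k (T : finType) (a : rel T) (o i : T -> nat) (v : T) :
  Inv k a ->
  (forall x, x != v -> o x = outdeg a x /\ i x = indeg a x) ->
  (forall x, (o x = outdeg a x /\ i x = indeg a x) \/ (o x = (outdeg a x).+1 /\ i x = indeg a x)
        \/ (o x = outdeg a x /\ i x = (indeg a x).+1)) ->
  k <= #|[set x | minn (o x) (i x) == k.-1]|.
Proof.
move=> [H1 [H2|[H2 H3 _]]] Hv Ho.
  apply: leq_trans (contrib_sub _ Hv); rewrite /cnt in H2; lia.
apply: leq_trans H2 _; apply: subset_leq_card; apply/subsetP => x; rewrite !inE /dmin.
have := H3 x; have := Ho x; move: (outdeg a x) (indeg a x) => p q.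
case=> [[-> ->]|[[-> ->]|[-> ->]]] -> //; lia.
Qed.

Lemma Inv_direct k (T1 T2 : finType) (a1 : rel T1) (a2 : rel T2) (v1 : T1) (v2 : T2) (dir : bool) :
  2 <= k -> Inv k a1 -> Inv k a2 -> Inv k (direct_rel a1 a2 v1 v2 dir).
Proof.
move=> k2 I1 I2; split.
  case=> x; rewrite ?out_inl ?in_inl ?out_inr ?in_inr.
    by have [] := I1.1 x; lia.
  by have [] := I2.1 x; lia.
left; rewrite /cnt card_sum_split.
have c1 := @contrib_dir k _ a1 (fun x => outdeg (direct_rel a1 a2 v1 v2 dir) (inl x))
   (fun x => indeg (direct_rel a1 a2 v1 v2 dir) (inl x)) v1 I1.
rewrite /= in c1.
have {}c1 : k <= #|[set x | dmin (direct_rel a1 a2 v1 v2 dir) (inl x) == k.-1]|.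
  apply: c1 => x; rewrite out_inl in_inl.
    by move/negbTE => ->; rewrite !andbF !addn0.
  by case: dir; case: (x == v1); rewrite /= ?addn0 ?addn1; tauto.
have c2 := @contrib_dir k _ a2 (fun x => outdeg (direct_rel a1 a2 v1 v2 dir) (inr x))
   (fun x => indeg (direct_rel a1 a2 v1 v2 dir) (inr x)) v2 I2.
rewrite /= in c2.
have {}c2 : k <= #|[set x | dmin (direct_rel a1 a2 v1 v2 dir) (inr x) == k.-1]|.
  apply: c2 => x; rewrite out_inr in_inr.
    by move/negbTE => ->; rewrite !andbF !addn0.
  by move: c1; case: dir; case: (x == v2); rewrite /= ?addn0 ?addn1; tauto.
lia.
Qed.
Lemma modS l j : j < l -> j.+1 %% l = if j.+1 == l then 0 else j.+1.
Proof.
move=> jl; case: eqP => [->|ne]; first by rewrite modnn.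
by rewrite modn_small //; lia.
Qed.
Lemma modP l i : 0 < l -> i < l -> (i + l.-1) %% l = if i == 0 then l.-1 else i.-1.
Proof.
move=> l0 il; case: eqP => [->|ne]; first by rewrite add0n modn_small //; lia.
have -> : i + l.-1 = i.-1 + l by lia.
by rewrite modnDr modn_small //; lia.
Qed.
Lemma t1 l i j : 2 <= l -> i < l -> j < l -> (i == j.+1 %% l) = (j == (i + l.-1) %% l).
Proof. move=> *. rewrite modS // modP //; last lia. case: (j.+1 =P l) => H1; case: (i =P 0) => H2; apply/eqP/eqP; lia. Qed.
Lemma t2 l i : 2 <= l -> i < l -> (i == i.+1 %% l) = false.
Proof. move=> *. rewrite modS //; case: (i.+1 =P l) => H; apply/eqP; lia. Qed.

Section Cyc.
Variables (l : nat) (Ts : 'I_l -> finType) (as_ : forall i, rel (Ts i)) (vs : forall i, Ts i).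
Hypothesis l2 : 2 <= l.
Let R := cyclic_rel as_ vs.
Let l0 : 0 < l. Proof. by apply: leq_trans l2. Qed.
Definition sI (i : 'I_l) : 'I_l := Ordinal (ltn_pmod (val i).+1 l0).
Definition pI (i : 'I_l) : 'I_l := Ordinal (ltn_pmod (val i + l.-1) l0).

Lemma sum_one (i s : 'I_l) (c : bool) : s != i ->
  \sum_(j | j != i) (c && (j == s)) = c.
Proof.
move=> si; rewrite (bigD1 s) //= eqxx andbT big1 ?addn0 // => j /andP [_ /negbTE ->].
by rewrite andbF.
Qed.

Lemma out_cyc i (x : Ts i) : outdeg R (@Tagged _ i Ts x) = outdeg (@as_ i) x + (x == @vs i).
Proof.
rewrite /outdeg card_sig_split (bigD1 i) //=; congr (_ + _).
  apply: eq_card => y; rewrite !inE /R /cyclic_rel /= eqxx tagged_asE /=.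
  by rewrite t2 // !andbF orbF.
rewrite -(@sum_one i (sI i) (x == @vs i)); last first.
  by apply/negP => /eqP /(congr1 val) /= /esym /eqP; rewrite t2.
apply: eq_bigr => j ji; rewrite -(card_cond _ (@vs j)); apply: eq_card => y.
rewrite !inE /R /cyclic_rel /= eq_sym (negbTE ji) /=.
have -> : (j == sI i) = (val j == (val i).+1 %% l) by [].
by case: (x == @vs i); case: (y == @vs j); rewrite //= andbC.
Qed.

Lemma in_cyc i (x : Ts i) : indeg R (@Tagged _ i Ts x) = indeg (@as_ i) x + (x == @vs i).
Proof.
rewrite /indeg card_sig_split (bigD1 i) //=; congr (_ + _).
  apply: eq_card => y; rewrite !inE /R /cyclic_rel /= eqxx tagged_asE /=.
  by rewrite t2 // !andbF orbF.
rewrite -(@sum_one i (pI i) (x == @vs i)); last first.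
  apply/negP => /eqP /(congr1 val) /= /esym /eqP; rewrite -t1 ?t2 //; apply: ltn_ord.
apply: eq_bigr => j ji; rewrite -(card_cond _ (@vs j)); apply: eq_card => y.
rewrite !inE /R /cyclic_rel /= (negbTE ji) /=.
have -> : (j == pI i) = (val i == (val j).+1 %% l) by rewrite t1 //=; apply: ltn_ord.
by case: (x == @vs i); case: (y == @vs j); rewrite //= andbC.
Qed.
End Cyc.

Definition Lab (T : finType) (a : rel T) n (f : T -> nat) :=
  [/\ injective f, (forall x, f x <= n), (forall m, m <= n -> exists x, f x = m) &
    (forall x y, a x y = (f y == (f x).+1) || (f x == (f y).+1))].

Lemma Lab_flip (T : finType) (a : rel T) n f : Lab a n f -> Lab a n (fun x => n - f x).
Proof.
move=> [fi fb fs fr]; split.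
- move=> x y /= E; apply: fi; have := fb x; have := fb y; lia.
- move=> x; lia.
- move=> m mn; have [x fx] := fs (n - m) (leq_subr _ _); exists x; lia.
- move=> x y; rewrite fr; have := fb x; have := fb y; lia.
Qed.

Lemma Lab_end (T : finType) (a : rel T) n f v : Lab a n f -> outdeg a v <= 1 ->
  f v = 0 \/ f v = n.
Proof.
move=> [fi fb fs fr] od.
case: (f v =P 0) => [|h0]; first by left.
case: (f v =P n) => [|h1]; first by right.
have [y1 e1] := fs (f v).-1 (leq_trans (leq_pred _) (fb v)).
have [y2 e2] := fs (f v).+1 (ltac:(have := fb v; lia)).
have : 2 <= outdeg a v; last lia.
have ne : y1 != y2 by apply/eqP => E; move: e1 e2; rewrite E; lia.
rewrite /outdeg; apply: (@leq_trans #|[set y1; y2]|); first by rewrite cards2 ne.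
apply: subset_leq_card; apply/subsetP => y.
rewrite !inE => /orP [] /eqP ->; rewrite fr; lia.
Qed.

Lemma ord2_ind (Ts : 'I_2 -> finType) (P : forall i, Ts i -> Prop) :
  (forall x : Ts ord0, P ord0 x) -> (forall x : Ts ord_max, P ord_max x) -> forall i x, P i x.
Proof.
move=> H0 H1 [[|[|m]] Hm] x.
- by rewrite (bool_irrelevance Hm (ltn0Sn 1)) in x *.
- by rewrite (bool_irrelevance Hm (ltnSn 1)) in x *.
- by [].
Qed.

Lemma PathLab_cyc2 (Ts : 'I_2 -> finType) (as_ : forall i, rel (Ts i)) (vs : forall i, Ts i) :
  (forall i, PathLab (@as_ i)) -> (forall i, outdeg (@as_ i) (vs i) <= 1) ->
  PathLab (cyclic_rel as_ vs).
Proof.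
move=> H Hd.
have [n0 [o0 [f0 L0]]] := H ord0; have {}L0 : Lab (@as_ ord0) n0 f0 := L0.
have [n1 [o1 [f1 L1]]] := H ord_max; have {}L1 : Lab (@as_ ord_max) n1 f1 := L1.
pose h0 := if f0 (vs ord0) == n0 then f0 else (fun x => n0 - f0 x).
have L0h : Lab (@as_ ord0) n0 h0 by rewrite /h0; case: ifP => _; [exact: L0 | exact: Lab_flip].
have e0 : h0 (vs ord0) = n0.
  rewrite /h0; case: ifP => [/eqP //|F]; have [E|E] := Lab_end L0 (Hd ord0); rewrite E in F *; lia.
pose h1 := if f1 (vs ord_max) == 0 then f1 else (fun x => n1 - f1 x).
have L1h : Lab (@as_ ord_max) n1 h1 by rewrite /h1; case: ifP => _; [exact: L1 | exact: Lab_flip].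
have e1 : h1 (vs ord_max) = 0.
  rewrite /h1; case: ifP => [/eqP //|F]; have [E|E] := Lab_end L1 (Hd ord_max); rewrite E in F *; lia.
case: L0h => i0 b0 s0 r0; case: L1h => i1 b1 s1 r1.
pose g := fun w : {i : 'I_2 & Ts i} => if tag w == ord0 then h0 (tagged_as (Tagged Ts (vs ord0)) w)
   else (n0.+1 + h1 (tagged_as (Tagged Ts (vs ord_max)) w)).
have g0 : forall x : Ts ord0, g (Tagged Ts x) = h0 x by move=> x; rewrite /g /= tagged_asE.
have g1 : forall x : Ts ord_max, g (Tagged Ts x) = n0.+1 + h1 x by move=> x; rewrite /g /= tagged_asE.
exists (n0 + n1).+1; split; first by rewrite /= oddD o0 o1.
exists g; split.
- case=> i x; case=> j y; move: i x; apply: ord2_ind => x; move: j y; apply: ord2_ind => y;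
  rewrite ?g0 ?g1.
  + by move/i0 => ->.
  + by have := b0 x; lia.
  + by have := b0 y; lia.
  + by move=> E; have -> : y = x by apply: i1; lia.
- case=> i x; move: i x; apply: ord2_ind => x;
  rewrite ?g0 ?g1.
  + by have := b0 x; lia.
  + by have := b1 x; lia.
- move=> m mN; case: (leqP m n0) => mn.
    by have [x hx] := s0 m mn; exists (Tagged Ts x); rewrite g0.
  have [x hx] := s1 (m - n0.+1) ltac:(lia); exists (Tagged Ts x); rewrite g1; lia.
- case=> i x; case=> j y; move: i x; apply: ord2_ind => x; move: j y; apply: ord2_ind => y;
  rewrite ?g0 ?g1.
  + rewrite /cyclic_rel /= tagged_asE r0 (_ : (0 == 1 %% 2) = false) // !andbF orbF; lia.
  + rewrite /cyclic_rel /= -(inj_eq i0) e0 -(inj_eq i1) e1; have := b0 x; lia.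
  + rewrite /cyclic_rel /= -(inj_eq i0) e0 -(inj_eq i1) e1; have := b0 y; lia.
  + rewrite /cyclic_rel /= tagged_asE r1 (_ : (1 == 2 %% 2) = false) // !andbF orbF; lia.
Qed.

Lemma Inv_cyc k l (Ts : 'I_l -> finType) (as_ : forall i, rel (Ts i)) (vs : forall i, Ts i) :
  2 <= k -> 2 <= l -> (forall i, Inv k (@as_ i)) ->
  (forall w, outdeg (cyclic_rel as_ vs) w <= k /\ indeg (cyclic_rel as_ vs) w <= k) ->
  Inv k (cyclic_rel as_ vs).
Proof.
move=> k2 l2 HI HD.
have oc := out_cyc as_ vs l2; have ic := in_cyc as_ vs l2.
have part1 : forall w, k.-1 <= outdeg (cyclic_rel as_ vs) w /\ k.-1 <= indeg (cyclic_rel as_ vs) w.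
  case=> i x; have := oc i x; have := ic i x; rewrite /Tagged /= => -> ->.
  by have [] := (HI i).1 x; lia.
split => //.
pose t i := #|[set x | dmin (cyclic_rel as_ vs) (@Tagged _ i Ts x) == k.-1]|.
have ct : cnt k (cyclic_rel as_ vs) = \sum_i t i by rewrite /cnt card_sig_split.
have tb : forall i, cnt k (@as_ i) - 1 <= t i.
  move=> i; apply: (@contrib_sub _ (@as_ i) (fun x => outdeg (cyclic_rel as_ vs) (@Tagged _ i Ts x)) (fun x => indeg (cyclic_rel as_ vs) (@Tagged _ i Ts x)) (vs i)) => x /negbTE xv.
  by rewrite oc ic xv !addn0.
have ck : forall i, k <= cnt k (@as_ i).
  by move=> i; case: (HI i) => _ [|[]]; lia.
have sl : l * k.-1 <= \sum_i t i.
  rewrite -[l in l * _]card_ord -sum_nat_const; apply: leq_sum => i _.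
  by have := tb i; have := ck i; lia.
rewrite ct.
have [k3|ek] : 3 <= k \/ k = 2 by lia.
  by left; nia.
subst k.
case: (boolP [exists i, 3 <= cnt 2 (@as_ i)]) => [/existsP [i0 Hi0]|Hn].
  left; apply: leq_trans (_ : \sum_(i < l) (1 + (i == i0)) <= _).
    rewrite big_split /= sum_nat_const card_ord (bigD1 i0) //= eqxx big1 => [|j /negbTE -> //].
    lia.
  apply: leq_sum => i _; case: eqP => [->|_]; [have := tb i0; have := ck i0 | have := tb i; have := ck i]; lia.
have Hex : forall i, [/\ 2 <= cnt 2 (@as_ i), (forall v, outdeg (@as_ i) v = indeg (@as_ i) v) & Exc 2 (@as_ i)].
  move=> i; case: (HI i) => _ [H|//].
  by move: Hn; rewrite negb_exists => /forallP /(_ i); rewrite H.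
have [l3|el] : 3 <= l \/ l = 2 by lia.
  by left; nia.
right; split.
- lia.
- case=> i x; have := oc i x; have := ic i x; rewrite /Tagged /= => -> ->.
  by case: (Hex i) => _ ->.
- subst l; rewrite /Exc /=; apply: PathLab_cyc2.
    by move=> i; case: (Hex i).
  move=> i; have := (HD (Tagged Ts (vs i))).1; rewrite oc eqxx; lia.
Qed.

Lemma Inv_reg k (T : finType) (a : rel T) :
  (forall v, outdeg a v = k.-1 /\ indeg a v = k.-1) ->
  Inv k a <-> (k.+1 <= #|T| \/ (k <= #|T| /\ Exc k a)).
Proof.
move=> H.
have cT : cnt k a = #|T|.
  rewrite /cnt -cardsT; apply: eq_card => v; rewrite !inE /dmin.
  by have [-> ->] := H v; rewrite minnn eqxx.
rewrite /Inv cT; split.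
  by case=> _ [|[? ? ?]]; [left|right].
move=> Hc; split; first by move=> v; have [-> ->] := H v.
case: Hc => [|[? ?]]; [left|right] => //; split => // v.
by have [-> ->] := H v.
Qed.

Lemma dcyc_deg n (v : 'I_n) : 2 <= n -> outdeg (dcycle n) v = 1 /\ indeg (dcycle n) v = 1.
Proof.
move=> n2; have n0 : 0 < n by lia.
split.
  apply: (eq_card1 (x := Ordinal (ltn_pmod (val v).+1 n0))) => j.
  by rewrite !inE /dcycle -(inj_eq val_inj).
apply: (eq_card1 (x := Ordinal (ltn_pmod (val v + n.-1) n0))) => j.
by rewrite !inE /dcycle -(inj_eq val_inj) /= t1.
Qed.

Lemma scyc_deg n (v : 'I_n) : 3 <= n -> outdeg (scycle n) v = 2 /\ indeg (scycle n) v = 2.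
Proof.
move=> n3; have n0 : 0 < n by lia.
pose s := Ordinal (ltn_pmod (val v).+1 n0); pose p := Ordinal (ltn_pmod (val v + n.-1) n0).
have sp : s != p.
  apply/eqP => /(congr1 (@nat_of_ord n)) /=; rewrite modS // modP //.
  have := ltn_ord v; case: ifP; case: ifP; lia.
have E : #|[set j : 'I_n | (nat_of_ord j == (nat_of_ord v).+1 %% n) || (nat_of_ord v == (nat_of_ord j).+1 %% n)]| = 2.
  rewrite (_ : 2 = #|[set s; p]|); last by rewrite cards2 sp.
  apply: eq_card => j.
  rewrite !inE -!(inj_eq val_inj) /= [X in _ || X]t1 //; lia.
split; first exact: E.
rewrite -E; apply: eq_card => j; rewrite !inE /scycle orbC.
done.
Qed.

Lemma diso_refl (T : finType) (a : rel T) : diso a a.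
Proof. by exists id; split => //; exists id. Qed.

Lemma Inv_base k (T : finType) (a : rel T) : 2 <= k -> inB k.-1 a -> Inv k a.
Proof.
case: k => [|[|[|[|k]]]] // _; rewrite /inB /=.
- case=> n n2 iso; apply: (Inv_iso iso); apply/Inv_reg; first by move=> v; exact: dcyc_deg.
  rewrite card_ord; have [n3|->] : 3 <= n \/ n = 2 by lia.
    by left.
  right; split => //.
  rewrite /Exc /=; exists 1; split => //; exists (@nat_of_ord 2); split.
  + exact: val_inj.
  + by case=> m /= hm; lia.
  + by move=> m hm; exists (Ordinal (hm : m < 2)).
  + by case=> [[|[|?]] ?] [[|[|?]] ?].
- case=> n /andP [n3 on] iso; apply: (Inv_iso iso); apply/Inv_reg; first by move=> v; exact: scyc_deg.
  rewrite card_ord; have [n5|->] : 4 <= n \/ n = 3 by move: n3 on; clear; case: n => [|[|[|[|[|]]]]]; lia.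
    by left.
  right; split => //; rewrite /Exc /=; exists id; split; first by exists id.
  by case=> [[|[|[|?]]] ?] [[|[|[|?]]] ?].
- case=> _ iso; apply: (Inv_iso iso); apply/Inv_reg.
    move=> v; rewrite /outdeg /indeg /scomplete.
    rewrite (_ : [set w | v != w] = ~: [set v]); last by apply/setP => w; rewrite !inE eq_sym.
    rewrite (_ : [set w | w != v] = ~: [set v]); last by apply/setP => w; rewrite !inE.
    by rewrite cardsC1 card_ord.
  by rewrite card_ord; right; split => //; exact: diso_refl.
Qed.

Lemma Dmax_iso k (T U : finType) (a : rel T) (b : rel U) :
  diso a b -> Dmax a <= k -> forall u, outdeg b u <= k /\ indeg b u <= k.
Proof.
move=> [f [fb fh]] D u; case: (fb) => g fg gf.
rewrite -(gf u) -(out_iso fb fh) -(in_iso fb fh); exact: Dmax_le.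
Qed.

Lemma Inv_ktree k (T : finType) (a : rel T) : 2 <= k -> ktree k a -> Inv k a.
Proof.
move=> k2; elim => {T a}.
- by move=> T a _; apply: Inv_base.
- move=> T a T1 T2 a1 a2 v1 v2 dir _ _ I1 _ I2 iso.
  exact: (Inv_iso iso (Inv_direct v1 v2 dir k2 I1 I2)).
- move=> T a l Ts as_ vs l2 D _ IH iso.
  exact: (Inv_iso iso (Inv_cyc k2 l2 IH (Dmax_iso iso D))).
Qed.

Unset Implicit Arguments.
Set Strict Implicit.
Theorem mainTheorem4 (k : nat) (T : finType) (a : rel T) :
  2 <= k -> ktree k a ->
  (forall v : T, k.-1 <= dmin a v) /\
  (~ diso a (scomplete k) ->
   ~ (exists2 n : nat, odd n & diso a (spath n)) ->
   k.+1 <= #|[set v : T | dmin a v == k.-1]|).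
Proof.
move=> k2 kt; have [H1 H2] := Inv_ktree k2 kt; split.
  by move=> v; rewrite /dmin leq_min; have [-> ->] := H1 v.
move=> nK nP; case: H2 => [//|[_ _]]; rewrite /Exc; case: ifP => _ E.
  by case: nP; apply: PathLab_spath.
by case: nK.
Qed.
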